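(* Let $X$ be a finite set of finite words and let $(w_i)_{i\in\mathbb{N}}$ be finite words with $\lim_{i\to\infty}|w_i| = \infty$. If every $w_i$ has an $X$-interpretation but no $w_i$ is a synchronizing word of $X$, then one can write $w_i = u_iv_i$ for each $i$ so that some subsequence of the sequence of shifted finite words $(u_i\,|\,v_i)_{i\in\mathbb{N}}$ converges to a bi-infinite word that has two different $X$-factorizations.
   Context: A word $w$ is a synchronizing word of $X$ if $w = w_1w_2$ for some words $w_1,w_2$ such that for every $v\in X^*$ of the form $v = pws$, we have $pw_1\in X^*$ and $w_2s\in X^*$. An $X$-interpretation of a finite word $w$ is a factorization $w = w_1w_2\cdots w_n$ where $w_1$ is a suffix of a word in $X$, $w_n$ is a prefix of a word in $X$, and $w_j\in X$ for $1<j<n$. The shifted word $(u\,|\,v)$ with $u = a_{-m}\cdots a_{-1}$, $v = a_0\cdots a_n$ is the map $\{-m,\dots,n\}\to$ letters, $k\mapsto a_k$. A sequence of shifted finite words $t_i:A_i\to$ letters converges to a bi-infinite word $t:\mathbb{Z}\to$ letters if for every $k\in\mathbb{Z}$ there is $L$ with $k\in A_i$ and $t_i(k)=t(k)$ for all $i\ge L$. An $X$-factorization of a bi-infinite word $t$ is a representation $t = \cdots x_{-2}x_{-1}p\,|\,q\,x_1x_2\cdots$ (with the bar marking position $0$) where all $x_j\in X$, $pq\in X$ and $q\neq\varepsilon$; it is recorded as the sequence $(\dots,x_{-2},x_{-1},p\,|\,q,x_1,x_2,\dots)$, and two factorizations are different if these sequences differ. *)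

(* Defs.v *)
From mathcomp Require Import all_boot all_algebra.
Set Implicit Arguments. Unset Strict Implicit. Unset Printing Implicit Defensive.

Section Words.
Variable A : eqType.
Implicit Types (X : seq (seq A)) (w : seq A).

Definition in_star X (v : seq A) : Prop :=
  exists ws : seq (seq A), (forall x, x \in ws -> x \in X) /\ flatten ws = v.

Definition synchronizing X w : Prop :=
  exists w1 w2 : seq A, w = w1 ++ w2 /\
    forall p s : seq A, in_star X (p ++ w ++ s) ->
      in_star X (p ++ w1) /\ in_star X (w2 ++ s).

Definition has_interpretation X w : Prop :=
  exists ws : seq (seq A),
    ws != [::] /\ flatten ws = w /\
    (exists2 x, x \in X & suffix (head [::] ws) x) /\
    (exists2 x, x \in X & prefix (last [::] ws) x) /\
    (forall j, 0 < j -> j.+1 < size ws -> nth [::] ws j \in X).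

(* The shifted word (u | v), as a partial map int -> A:
   position -(n+1) is the (n+1)-th letter of u from the right,
   position n >= 0 is the n-th letter of v (0-based). *)
Definition shifted (u v : seq A) (k : int) : option A :=
  match k with
  | Posz n => onth v n
  | Negz n => onth (rev u) n
  end.

Definition converges (ts : nat -> seq A * seq A) (t : int -> A) : Prop :=
  forall k : int, exists L : nat, forall i, L <= i ->
    shifted (ts i).1 (ts i).2 k = Some (t k).

Definition psum (ws : nat -> seq A) (n : nat) : nat := \sum_(i < n) size (ws i).

Definition concat_is (ws : nat -> seq A) (r : nat -> A) : Prop :=
  forall k : nat, exists n : nat,
    psum ws n <= k /\ onth (ws n) (k - psum ws n) = Some (r k).

(* X-factorization t = ... x_{-2} x_{-1} p | q x_1 x_2 ... , recorded as
   (xl, p, q, xr) with xl n = x_{-(n+1)} and xr n = x_{n+1}. *)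
Definition is_factorization X (t : int -> A)
    (xl : nat -> seq A) (p q : seq A) (xr : nat -> seq A) : Prop :=
  (forall n, xl n \in X) /\ (forall n, xr n \in X) /\
  p ++ q \in X /\ q != [::] /\
  concat_is (fun n => if n is n'.+1 then xr n' else q) (fun k => t (Posz k)) /\
  concat_is (fun n => if n is n'.+1 then rev (xl n') else rev p)
            (fun k => t (Negz k)).

Definition different_fact (xl : nat -> seq A) (p q : seq A) (xr : nat -> seq A)
    (xl' : nat -> seq A) (p' q' : seq A) (xr' : nat -> seq A) : Prop :=
  (exists n, xl n <> xl' n) \/ p <> p' \/ q <> q' \/ (exists n, xr n <> xr' n).

End Words.

(* Main.v *)
Require Import Defs.
From mathcomp Require Import all_boot all_algebra.
From Stdlib Require Import Classical ClassicalEpsilon Lia.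
From mathcomp Require Import zify.
Set Implicit Arguments. Unset Strict Implicit. Unset Printing Implicit Defensive.


Definition infp (P : nat -> Prop) := forall N, exists n, N <= n /\ P n.

Lemma pigeon (T : eqType) (L : seq T) (P : nat -> Prop) (h : nat -> T) :
  infp P -> (forall n, P n -> h n \in L) -> exists v, infp (fun n => P n /\ h n = v).
Proof.
elim: L P => [|a L IH] P hP hL.
  by have [n [_ Pn]] := hP 0; have := hL n Pn.
case: (classic (infp (fun n => P n /\ h n = a))) => [H|H]; first by exists a.
have [N HN] : exists N, ~ exists n, N <= n /\ P n /\ h n = a.
  apply: NNPP => HH; apply: H => N; apply: NNPP => H1; apply: HH; exists N.
  by move=> [n [Nn [Pn hn]]]; apply: H1; exists n.
have H1 : infp (fun n => P n /\ N <= n).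
  move=> N'; have [n [n1 n2]] := hP (maxn N N'); exists n.
  by rewrite geq_max in n1; case/andP: n1 => n11 n12; split=> //; split.
have H2 : forall n, P n /\ N <= n -> h n \in L.
  move=> n [Pn Nn]; have := hL n Pn; rewrite inE => /orP[/eqP ha|//].
  by exfalso; apply: HN; exists n.
have [v Hv] := IH _ H1 H2.
exists v => N'; have [n [n1 [[n2 n3] n4]]] := Hv N'; by exists n.
Qed.

Section Compact.
Variables (T : eqType) (L : seq T) (g : nat -> nat -> T).
Hypothesis hL : forall i k, g i k \in L.

Let inh : inhabited T := inhabits (g 0 0).
Definition choosev (P : nat -> Prop) (k : nat) : T :=
  epsilon inh (fun v => infp (fun n => P n /\ g n k = v)).
Fixpoint Ps (k : nat) : nat -> Prop :=
  match k with 0 => fun _ => True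
  | k'.+1 => fun n => Ps k' n /\ g n k' = choosev (Ps k') k' end.

Lemma Ps_inf k : infp (Ps k).
Proof.
elim: k => [|k IH] /=; first by move=> N; exists N.
rewrite /choosev; apply: (epsilon_spec inh (fun v => infp (fun n => Ps k n /\ g n k = v))).
by apply: pigeon.
Qed.

Lemma Ps_mono k k' n : k <= k' -> Ps k' n -> Ps k n.
Proof.
elim: k' => [|k' IH]; first by rewrite leqn0 => /eqP->.
rewrite leq_eqVlt => /orP[/eqP->//|]; rewrite ltnS => kk [H _]; exact: IH.
Qed.

Let inhn : inhabited nat := inhabits 0.
Fixpoint phi (i : nat) : nat :=
  match i with 0 => 0 | i'.+1 => epsilon inhn (fun n => phi i' < n /\ Ps i'.+1 n) end.

Lemma phi_spec i : Ps i (phi i) /\ phi i < phi i.+1.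
Proof.
have H j : Ps j.+1 (phi j.+1) /\ phi j < phi j.+1.
  have := epsilon_spec inhn (fun n => phi j < n /\ Ps j.+1 n).
  move=> /(_ _)/= [|a b]; last by split.
  by have [n [n1 n2]] := Ps_inf j.+1 (phi j).+1; exists n.
case: i => [|i]; first by split=> //; case: (H 0).
by case: (H i.+1) => _ ->; case: (H i).
Qed.

Lemma compact : exists phi : nat -> nat, (forall i, phi i < phi i.+1) /\
  exists lim : nat -> T, forall k, exists M, forall i, M <= i -> g (phi i) k = lim k.
Proof.
exists phi; split; first by move=> i; case: (phi_spec i).
exists (fun k => choosev (Ps k) k) => k; exists k.+1 => i ki.
by have [/(Ps_mono ki) [_ ->] _] := phi_spec i.
Qed.
End Compact.

Section W.
Variable A : eqType.
Definition State := (seq A * nat)%type.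
Definition stepR (a b : State) : Prop :=
  if a.2.+1 < size a.1 then b = (a.1, a.2.+1) else b.2 = 0.

Lemma psumS (f : nat -> seq A) n : psum f n.+1 = psum f n + size (f n).
Proof. by rewrite /psum big_ord_recr. Qed.
Lemma psum0 (f : nat -> seq A) : psum f 0 = 0.
Proof. by rewrite /psum big_ord0. Qed.

Lemma onth_drop (x : seq A) o k : onth (drop o x) k = onth x (o + k).
Proof. by rewrite !onthE /= map_drop nth_drop. Qed.

Section Right.
Variables (P : seq A -> Prop) (s : nat -> State) (r : nat -> A).
Hypothesis hv : forall k, P (s k).1 /\ (s k).2 < size (s k).1 /\ onth (s k).1 (s k).2 = Some (r k).
Hypothesis hs : forall k, stepR (s k) (s k.+1).

Lemma blk k d : (s k).2 + d < size (s k).1 -> s (k + d) = ((s k).1, (s k).2 + d).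
Proof.
elim: d => [|d IH] h; first by rewrite addn0 addn0 -surjective_pairing.
have := hs (k + d); rewrite IH; last by lia.
rewrite /stepR /=; rewrite !addnS in h *; by rewrite h => ->.
Qed.

Lemma nxt k : (s (k + (size (s k).1 - (s k).2))).2 = 0.
Proof.
have [_ [h _]] := hv k.
have := blk (d := size (s k).1 - (s k).2 - 1) (k := k); rewrite (_ : (s k).2 + _ = (size (s k).1).-1); last by lia.
move=> /(_ _)/= H; have {}H := H ltac:(lia).
have := hs (k + (size (s k).1 - (s k).2 - 1)); rewrite H /stepR /=.
rewrite prednK; last by lia.
rewrite ltnn (_ : (k + (size (s k).1 - (s k).2 - 1)).+1 = k + (size (s k).1 - (s k).2)) //; lia.
Qed.

Fixpoint pos n := match n with 0 => size (s 0).1 - (s 0).2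
  | n'.+1 => pos n' + size (s (pos n')).1 end.

Lemma pos0 n : (s (pos n)).2 = 0.
Proof.
case: n => [|n] /=; first by have := nxt 0.
have := nxt (pos n); elim: n => [|n _] /=.
Abort.

Lemma pos0 n : (s (pos n)).2 = 0.
Proof.
elim: n => [|n IH] /=; first exact: (nxt 0).
by have := nxt (pos n); rewrite IH subn0.
Qed.

Definition fR n := if n is n'.+1 then (s (pos n')).1 else drop (s 0).2 (s 0).1.

Lemma psum_pos n : psum fR n.+1 = pos n.
Proof.
elim: n => [|n IH]; first by rewrite psumS psum0 /= size_drop.
by rewrite psumS IH.
Qed.

Lemma fR_pos n : 0 < size (fR n).
Proof.
case: n => [|n] /=; first by rewrite size_drop; have [_ [h _]] := hv 0; lia.
by have [_ [h _]] := hv (pos n); lia.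
Qed.

Lemma bracket k : exists n, psum fR n <= k < psum fR n.+1.
Proof.
elim: k => [|k [n /andP[h1 h2]]].
  by exists 0; rewrite psum0 /= psumS psum0 add0n fR_pos.
case: (ltnP k.+1 (psum fR n.+1)) => h3; first by exists n; rewrite h3 andbT; lia.
exists n.+1; rewrite (psumS fR n.+1); have := fR_pos n.+1; lia.
Qed.

Lemma right_fact : exists xr, (forall n, P (xr n)) /\
  concat_is (fun n => if n is n'.+1 then xr n' else drop (s 0).2 (s 0).1) r.
Proof.
exists (fun n => (s (pos n)).1); split; first by move=> n; case: (hv (pos n)).
change (concat_is fR r).
move=> k; have [n /andP[h1 h2]] := bracket k; exists n; split=> //.
move: h1 h2; case: n => [|n].
  rewrite psum0 psumS psum0 /= size_drop subn0 add0n => _ h2.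
  rewrite onth_drop; have [_ [_ h]] := hv k.
  have H := blk (k := 0) (d := k) ltac:(lia).
  by rewrite add0n in H; rewrite H in h.
rewrite !psum_pos => h1 h2 /=; simpl in h2.
have H := blk (k := pos n) (d := k - pos n); rewrite pos0 add0n (subnKC h1) in H.
have [_ [_ h]] := hv k; rewrite H /= in h => //; lia.
Qed.
End Right.

Lemma concat_is_ext (f g : nat -> seq A) r : (forall n, f n = g n) -> concat_is f r -> concat_is g r.
Proof.
move=> e h k; have [n [h1 h2]] := h k; exists n.
have ep : psum f n = psum g n by apply: eq_bigr => i _; rewrite e.
by rewrite -ep -e.
Qed.

Lemma concat_is_cons0 (f : nat -> seq A) r :
  concat_is f r -> concat_is (fun n => if n is n'.+1 then f n' else [::]) r.
Proof.
move=> h k; have [n [h1 h2]] := h k; exists n.+1.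
have ep : psum (fun n => if n is n'.+1 then f n' else [::]) n.+1 = psum f n.
  by rewrite /psum big_ord_recl /= add0n; apply: eq_bigr.
by rewrite ep.
Qed.

Definition revst (a : State) : State := (rev a.1, size a.1 - a.2.+1).

Lemma stepR_rev a b : a.2 < size a.1 -> b.2 < size b.1 -> stepR a b -> stepR (revst b) (revst a).
Proof.
case: a => x o; case: b => y o'; rewrite /stepR /revst /= => h1 h2.
case: ifP => h3.
  case=> -> ->; rewrite size_rev.
  have -> : (size x - o.+2).+1 < size x by lia.
  congr pair; lia.
move=> e; subst o'; rewrite size_rev.
have -> : (size y - 1).+1 < size y = false by apply/negbTE; rewrite -leqNgt; lia.
lia.
Qed.

Lemma onth_rev (x : seq A) o : o < size x -> onth (rev x) (size x - o.+1) = onth x o.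
Proof.
move=> h; rewrite !onthE /= map_rev nth_rev size_map; last by lia.
by congr nth; lia.
Qed.

Lemma fact_from_states (X : seq (seq A)) (s : int -> State) (t : int -> A) :
  (forall k, (s k).1 \in X /\ (s k).2 < size (s k).1 /\ onth (s k).1 (s k).2 = Some (t k)) ->
  (forall k, stepR (s k) (s (k + 1)%R)) ->
  exists xl xr, is_factorization X t xl (take (s 0%R).2 (s 0%R).1) (drop (s 0%R).2 (s 0%R).1) xr.
Proof.
move=> hv hs.
have hsR : forall k, stepR (s (Posz k)) (s (Posz k.+1)).
  by move=> k; have := hs (Posz k); rewrite (_ : (Posz k + 1)%R = Posz k.+1) //; lia.
have [xr [hxr cr]] := right_fact (P := fun y => y \in X) (s := fun k => s (Posz k))
   (r := fun k => t (Posz k)) (fun k => hv k) hsR.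
have hNS : forall k, (Negz k.+1 + 1)%R = Negz k by move=> k; lia.
have hvL : forall k, (fun y => rev y \in X) (revst (s (Negz k))).1 /\
    (revst (s (Negz k))).2 < size (revst (s (Negz k))).1 /\
    onth (revst (s (Negz k))).1 (revst (s (Negz k))).2 = Some (t (Negz k)).
  move=> k; have [h1 [h2 h3]] := hv (Negz k); rewrite /revst /= revK size_rev.
  by split=> //; split; [lia | rewrite onth_rev].
have hsL : forall k, stepR (revst (s (Negz k))) (revst (s (Negz k.+1))).
  move=> k; have := hs (Negz k.+1); rewrite hNS; apply: stepR_rev.
    by case: (hv (Negz k.+1)) => _ [].
  by case: (hv (Negz k)) => _ [].
have [xr' [hxr' cl]] := right_fact (P := fun y => rev y \in X) (s := fun k => revst (s (Negz k))) (r := fun k => t (Negz k)) hvL hsL.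
have hm1 := hs (Negz 0); rewrite (_ : (Negz 0 + 1)%R = 0%R) in hm1; last by lia.
have [hv0 [hv1 _]] := hv 0%R.
have [hw0 [hw1 _]] := hv (Negz 0).
move: hm1 hv0 hv1 hw0 hw1 cl; rewrite /stepR.
set x0 := (s 0%R).1; set o0 := (s 0%R).2; set y := (s (Negz 0)).1; set o' := (s (Negz 0)).2.
have -> : s (Negz 0) = (y, o') by rewrite /y /o' -surjective_pairing.
rewrite /revst /=.
case: ifP => hc.
  move=> e hv0 hv1 hw0 hw1 cl.
  have ey : x0 = y by rewrite /x0 e.
  have eo : o0 = o'.+1 by rewrite /o0 e.
  exists (fun n => rev (xr' n)), xr; split; first by move=> n; exact: hxr'.
  split=> //; split; first by rewrite cat_take_drop.
  split; first by rewrite -size_eq0 size_drop; apply/eqP; lia.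
  split; first by exact: cr.
  apply: concat_is_ext cl => -[|n] /=; last by rewrite revK.
  by rewrite drop_rev -ey eo; congr (rev (take _ _)); rewrite -ey in hw1; lia.
move=> eo hv0 hv1 hw0 hw1 cl.
exists (fun n => if n is n'.+1 then rev (xr' n') else y), xr.
split; first by case.
split=> //; split; first by rewrite cat_take_drop.
split; first by rewrite -size_eq0 size_drop; apply/eqP; lia.
split; first by exact: cr.
rewrite eo take0.
apply: concat_is_ext (concat_is_cons0 cl) => -[|[|n]] //=; last by rewrite revK.
by rewrite (_ : size y - o'.+1 = 0) ?drop0 //; lia.
Qed.
End W.


Section W2.
Variable A : eqType.
Variable X : seq (seq A).
Local Notation State := (State A).

Fixpoint st (ws : seq (seq A)) (j : nat) : State :=
  match ws with [::] => ([::], 0)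
  | y :: ws' => if j < size y then (y, j) else st ws' (j - size y) end.

Lemma st_ok ws j : j < size (flatten ws) ->
  (st ws j).1 \in ws /\ (st ws j).2 < size (st ws j).1 /\
  onth (st ws j).1 (st ws j).2 = onth (flatten ws) j.
Proof.
elim: ws j => [|y ws IH] j //=; rewrite size_cat onth_cat.
case: ifP => jy /=; first by rewrite mem_head jy.
move=> H; have := IH (j - size y); rewrite ltn_subLR ?H; last by rewrite leqNgt jy.
by case=> // h1 [h2 h3]; rewrite inE h1 orbT.
Qed.

Lemma st_0 ws : 0 < size (flatten ws) -> (st ws 0).2 = 0.
Proof.
elim: ws => [|y ws IH] //=; rewrite size_cat; case: ifP => //.
by rewrite lt0n => /negbFE/eqP ->; rewrite subn0 add0n.
Qed.

Lemma st_step ws j : j.+1 < size (flatten ws) -> stepR (st ws j) (st ws j.+1).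
Proof.
elim: ws j => [|y ws IH] j //=; rewrite size_cat => H.
case: ifP => jy.
  rewrite /stepR /=; case: (ltnP j.+1 (size y)) => jy2 //.
  have -> : j.+1 - size y = 0 by apply/eqP; rewrite subn_eq0.
  by apply: st_0; move: H; rewrite -(subnK jy2) addnC ltn_add2l => /(leq_ltn_trans (leq0n _)).
have yj : size y <= j by rewrite leqNgt jy.
have jy2 : (j.+1 < size y) = false by apply/negbTE; rewrite -leqNgt; apply: leq_trans yj _.
rewrite jy2 (subSn yj); apply: IH.
rewrite -(subSn yj) ltn_subLR //; apply: leq_trans yj _; exact: leqnSn.
Qed.

Lemma st_back ws j : j < size (flatten ws) ->
  (st ws j).2 <= j /\ st ws (j - (st ws j).2) = ((st ws j).1, 0).
Proof.
elim: ws j => [|y ws IH] j //=; rewrite size_cat => H.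
case: ifP => jy /=; first by rewrite subnn leqnn (leq_ltn_trans _ jy).
have yj : size y <= j by rewrite leqNgt jy.
have H' : j - size y < size (flatten ws) by rewrite ltn_subLR.
have [h1 h2] := IH (j - size y) H'.
move: h1 h2; set o := (st ws (j - size y)).2 => h1 h2.
split; first by lia.
have e : j - o = (j - size y - o) + size y by lia.
have -> : (j - o < size y) = false by apply/negbTE; rewrite -leqNgt; lia.
by rewrite e addnK.
Qed.

Lemma st_cut ws j : (forall x, x \in ws -> x \in X) -> j < size (flatten ws) ->
  (st ws j).2 = 0 -> in_star X (take j (flatten ws)) /\ in_star X (drop j (flatten ws)).
Proof.
elim: ws j => [|y ws IH] j //= hX; rewrite size_cat take_cat drop_cat => H.
case: ifP => jy /=.
  move=> j0; subst j; rewrite take0 drop0; split; first by exists [::].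
  by exists (y :: ws).
move=> H0.
have hX' : forall x, x \in ws -> x \in X by move=> x xi; apply: hX; rewrite inE xi orbT.
have H' : j - size y < size (flatten ws) by rewrite ltn_subLR // leqNgt jy.
have [[ws1 [h1 e1]] [ws2 [h2 e2]]] := IH (j - size y) hX' H' H0.
split; first exists (y :: ws1).
  split; last by rewrite /= e1.
  by move=> x; rewrite inE => /orP[/eqP->|/h1//]; apply: hX; rewrite mem_head.
by exists ws2.
Qed.

Lemma st_cut_end ws : (forall x, x \in ws -> x \in X) -> in_star X (flatten ws).
Proof. by move=> h; exists ws. Qed.

Definition good_states (w : seq A) (sg : nat -> State) :=
  (forall j, j < size w -> (sg j).1 \in X /\ (sg j).2 < size (sg j).1 /\
      onth (sg j).1 (sg j).2 = onth w j) /\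
  (forall j, j.+1 < size w -> stepR (sg j) (sg j.+1)).

Lemma take_pc (p z : seq A) c : take (size p + c) (p ++ z) = p ++ take c z.
Proof. by rewrite take_cat ltnNge leq_addr /= addKn. Qed.
Lemma drop_pc (p z : seq A) c : drop (size p + c) (p ++ z) = drop c z.
Proof. by rewrite drop_cat ltnNge leq_addr /= addKn. Qed.
Lemma drop_le (w s : seq A) c : c <= size w -> drop c (w ++ s) = drop c w ++ s.
Proof.
rewrite drop_cat leq_eqVlt => /orP[/eqP->|->//].
by rewrite ltnn subnn drop0 drop_size.
Qed.

Lemma nonsync_at w c : ~ synchronizing X w -> c <= size w ->
  exists p ws, (forall x, x \in ws -> x \in X) /\ (exists s, flatten ws = p ++ w ++ s) /\
    size p + c < size (flatten ws) /\ (st ws (size p + c)).2 <> 0.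
Proof.
move=> ns cw; apply: NNPP => H; apply: ns; exists (take c w), (drop c w).
split; first by rewrite cat_take_drop.
move=> p s [ws [hX e]].
have e1 : take (size p + c) (flatten ws) = p ++ take c w.
  by rewrite e take_pc takel_cat.
have e2 : drop (size p + c) (flatten ws) = drop c w ++ s.
  by rewrite e drop_pc drop_le.
case: (ltnP (size p + c) (size (flatten ws))) => hlt.
  case: (eqVneq (st ws (size p + c)).2 0) => h0.
    by rewrite -e1 -e2; apply: st_cut.
  by exfalso; apply: H; exists p, ws; split=> //; split; [exists s|split=> //; apply/eqP].
move: hlt; rewrite e !size_cat => hlt.
have cwe : c = size w by lia.
have s0 : s = [::] by apply/nilP; rewrite /nilp; lia.
subst; rewrite cats0 in e; rewrite take_size drop_size; split; first by exists ws.
by exists [::].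
Qed.

Lemma states_of p ws s w : (forall x, x \in ws -> x \in X) -> flatten ws = p ++ w ++ s ->
  good_states w (fun j => st ws (size p + j)).
Proof.
move=> hX e; split.
  move=> j jw; have hj : size p + j < size (flatten ws) by rewrite e !size_cat; lia.
  have [h1 [h2 h3]] := st_ok hj; split; first exact: hX.
  by split=> //; rewrite h3 e onth_cat ltnNge leq_addr /= addKn onth_cat jw.
move=> j jw; rewrite addnS; apply: st_step; rewrite e !size_cat; lia.
Qed.

Lemma per_i (Mx : nat) (hM : forall x, x \in X -> size x <= Mx) w :
  ~ synchronizing X w -> Mx.*2 < size w ->
  exists c (sg sg' : nat -> State),
    c <= (size w)./2 <= c + Mx /\
    good_states w sg /\ good_states w sg' /\ (sg c).2 = 0 /\ (sg' c).2 <> 0.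
Proof.
move=> ns hw; set m := (size w)./2.
have hm1 : Mx <= m by rewrite /m; move: hw; rewrite -(odd_double_half (size w)); case: odd; lia.
have hm2 : m < size w by rewrite /m; move: hw; rewrite -{2}(odd_double_half (size w)); case: odd; lia.
have [p [ws [hX [[s e] [hlt hne]]]]] := nonsync_at ns (ltnW hm2).
have [hb1 hb2] := st_back hlt.
have [ok1 [ok2 _]] := st_ok hlt.
have hsz := hM _ (hX _ ok1).
move: hne hb1 hb2 ok2 hsz; set o := (st ws (size p + m)).2 => hne hb1 hb2 ok2 hsz.
have cw : m - o <= size w by lia.
have [p' [ws' [hX' [[s' e'] [hlt' hne']]]]] := nonsync_at ns cw.
exists (m - o), (fun j => st ws (size p + j)), (fun j => st ws' (size p' + j)).
split; first by apply/andP; split; lia.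
split; first exact: states_of e.
split; first exact: states_of e'.
split=> //.
have -> : size p + (m - o) = size p + m - o by lia.
by rewrite hb2.
Qed.
End W2.

Section Main.
Variable A : eqType.
Variable X : seq (seq A).
Local Notation State := (State A).
Variable Mx : nat.

Definition Pdat (W : seq A) (D : nat * (nat -> State) * (nat -> State)) :=
  D.1.1 <= (size W)./2 <= D.1.1 + Mx /\
  good_states X W D.1.2 /\ good_states X W D.2 /\ (D.1.2 D.1.1).2 = 0 /\ (D.2 D.1.1).2 <> 0.

Definition idx (c : nat) (k : int) : nat :=
  match k with Posz n => c + n | Negz n => c - n.+1 end.
Definition win (c sz : nat) (k : int) : Prop :=
  (match k with Posz _ => True | Negz n => n < c end) /\ (idx c k).+1 < sz.
Definition absk (k : int) : nat := match k with Posz n => n | Negz n => n end.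

Lemma idxS c k : (match k with Posz _ => True | Negz n => n < c end) ->
  idx c (k + 1)%R = (idx c k).+1.
Proof.
case: k => n; first by move=> _ /=; lia.
case: n => [|n] h.
  by rewrite (_ : (Negz 0 + 1)%R = Posz 0) /=; [lia | lia].
by rewrite (_ : (Negz n.+1 + 1)%R = Negz n) /=; [lia | lia].
Qed.

Lemma win_of W D k : Pdat W D -> Mx.*2 + (absk k).*2 + 4 <= size W -> win D.1.1 (size W) k.
Proof.
case=> /andP[h1 h2] _ hs.
have := odd_double_half (size W); set m := (size W)./2 => hm.
rewrite -!addnn in hs.
case: k hs => n /= hs; split=> //; case: odd hm => /= hm; lia.
Qed.

Lemma onth_take' (w : seq A) c j : j < c -> onth (take c w) j = onth w j.
Proof. by move=> h; rewrite !onthE /= map_take nth_take. Qed.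

Lemma onth_rev' (x : seq A) n : n < size x -> onth (rev x) n = onth x (size x - n.+1).
Proof.
move=> h; rewrite -(onth_rev (x := x) (o := size x - n.+1)); last by lia.
by congr onth; lia.
Qed.

Lemma local W D k : Pdat W D -> win D.1.1 (size W) k ->
  ((D.1.2 (idx D.1.1 k)).1 \in X /\ (D.1.2 (idx D.1.1 k)).2 < size (D.1.2 (idx D.1.1 k)).1 /\ onth (D.1.2 (idx D.1.1 k)).1 (D.1.2 (idx D.1.1 k)).2 = onth W (idx D.1.1 k)) /\
  ((D.2 (idx D.1.1 k)).1 \in X /\ (D.2 (idx D.1.1 k)).2 < size (D.2 (idx D.1.1 k)).1 /\ onth (D.2 (idx D.1.1 k)).1 (D.2 (idx D.1.1 k)).2 = onth W (idx D.1.1 k)) /\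
  idx D.1.1 (k + 1)%R = (idx D.1.1 k).+1 /\
  stepR (D.1.2 (idx D.1.1 k)) (D.1.2 (idx D.1.1 k).+1) /\ stepR (D.2 (idx D.1.1 k)) (D.2 (idx D.1.1 k).+1) /\
  shifted (take D.1.1 W) (drop D.1.1 W) k = onth W (idx D.1.1 k).
Proof.
case: D => [[c sg] sg'] /= [hb [[g1 g2] [[g1' g2'] _]]] [hk hj].
split; first by apply: g1; lia.
split; first by apply: g1'; lia.
split; first by rewrite idxS.
split; first by apply: g2.
split; first by apply: g2'.
move: hk hj; case: k => n hk hj; rewrite /shifted /idx in hk hj *; simpl in hk, hj; first by rewrite onth_drop.
have hc : c <= size W.
  move: hb => /= /andP[h1 _]; apply: leq_trans h1 _.
  rewrite -{2}(odd_double_half (size W)) -addnn; lia.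
rewrite onth_rev'; last by rewrite size_take; case: (ltnP c (size W)) => h; lia.
rewrite onth_take'; last by rewrite size_take; case: (ltnP c (size W)) => h; lia.
by rewrite size_take; case: (ltnP c (size W)) => h; [|have -> : c = size W by lia].
Qed.
Lemma onth_some (x : seq A) o a0 : o < size x -> onth x o = Some (nth a0 x o).
Proof. by move=> h; rewrite onthE /= (nth_map a0). Qed.
End Main.

Definition enc (k : int) : nat := match k with Posz n => n.*2 | Negz n => n.*2.+1 end.
Definition dec (n : nat) : int := if odd n then Negz n./2 else Posz n./2.
Lemma decK k : dec (enc k) = k.
Proof. by case: k => n; rewrite /dec /enc /= ?odd_double ?doubleK //= uphalf_double. Qed.

Lemma phi_ge (phi : nat -> nat) : (forall i, phi i < phi i.+1) -> forall i, i <= phi i.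
Proof. move=> h; elim=> // i IH; exact: leq_ltn_trans IH (h i). Qed.

Lemma sumn_bound (A : eqType) (X : seq (seq A)) x : x \in X -> size x <= sumn [seq size x | x <- X].
Proof.
elim: X => [|y X IH] //=; rewrite inE => /orP[/eqP->|/IH]; first exact: leq_addr.
move=> h; apply: leq_trans h _; exact: leq_addl.
Qed.

Theorem lemma28 (A : eqType) (X : seq (seq A)) (w : nat -> seq A) :
  (forall N : nat, exists M : nat, forall i, M <= i -> N <= size (w i)) ->
  (forall i, has_interpretation X (w i)) ->
  (forall i, ~ synchronizing X (w i)) ->
  exists u v : nat -> seq A,
    (forall i, w i = u i ++ v i) /\
    exists phi : nat -> nat, (forall i, phi i < phi i.+1) /\
    exists t : int -> A,
      converges (fun i => (u (phi i), v (phi i))) t /\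
      exists (xl : nat -> seq A) (p q : seq A) (xr : nat -> seq A)
             (xl' : nat -> seq A) (p' q' : seq A) (xr' : nat -> seq A),
        is_factorization X t xl p q xr /\
        is_factorization X t xl' p' q' xr' /\
        different_fact xl p q xr xl' p' q' xr'.
Proof.
move=> hsize _ hns.
set Mx := sumn [seq size x | x <- X].
have hM : forall x, x \in X -> size x <= Mx := fun x => @sumn_bound A X x.
have [M1 HM1] := hsize 1.
have := HM1 M1 (leqnn _); case eM1: (w M1) => [|a0 rest] // _.
pose good i := Mx.*2 < size (w i).
pose d0S : State A := ([::], 0).
have inhD : inhabited (nat * (nat -> State A) * (nat -> State A)) :=
  inhabits (0, fun _ => d0S, fun _ => d0S).
pose D i := epsilon inhD (fun d => good i -> Pdat X Mx (w i) d).
have hD : forall i, good i -> Pdat X Mx (w i) (D i).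
  move=> i gi.
  have ex : exists d, good i -> Pdat X Mx (w i) d.
    have [c [sg [sg' H]]] := per_i hM (hns i) gi.
    by exists (c, sg, sg').
  exact: (epsilon_spec inhD _ ex gi).
pose c i := (D i).1.1.
exists (fun i => take (c i) (w i)), (fun i => drop (c i) (w i)).
split; first by move=> i; rewrite cat_take_drop.
pose h i (k : int) := ((D i).1.2 (idx (c i) k), (D i).2 (idx (c i) k)).
pose S := [seq (x, o) | x <- X, o <- iota 0 (size x)].
pose d0 := (d0S, d0S).
pose L := d0 :: [seq (a, b) | a <- S, b <- S].
pose g i n := if h i (dec n) \in L then h i (dec n) else d0.
have hL : forall i n, g i n \in L.
  by move=> i n; rewrite /g; case: ifP => // _; exact: mem_head.
have [phi [hphi [lim hlim]]] := compact hL.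
exists phi; split=> //.
have hge := phi_ge hphi.
have EV : forall k, exists I, forall i, I <= i ->
    good (phi i) /\ win (c (phi i)) (size (w (phi i))) k /\ h (phi i) k = lim (enc k).
  move=> k; have [Mk HMk] := hlim (enc k).
  have [MN HMN] := hsize (Mx.*2 + (absk k).*2 + 4).
  exists (maxn Mk MN) => i; rewrite geq_max => /andP[i1 i2].
  have hs := HMN (phi i) (leq_trans i2 (hge i)).
  have gi : good (phi i) by rewrite /good; lia.
  have hP := hD _ gi.
  have hw := win_of hP hs.
  split=> //; split=> //.
  rewrite -(HMk i i1) /g decK.
  have [[l1 [l2 _]] [[l1' [l2' _]] _]] := local hP hw.
  have memS : forall a : State A, a.1 \in X -> a.2 < size a.1 -> a \in S.
    by case=> x o /= hx ho; apply/allpairsPdep; exists x, o; split=> //; rewrite mem_iota; lia.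
  rewrite ifT // inE; apply/orP; right; rewrite /h.
  apply/allpairsP; exists ((D (phi i)).1.2 (idx (c (phi i)) k), (D (phi i)).2 (idx (c (phi i)) k)).
  by split=> //; apply: memS.
pose s k := (lim (enc k)).1.
pose s' k := (lim (enc k)).2.
pose t k := nth a0 (s k).1 (s k).2.
have V : forall k,
   ((s k).1 \in X /\ (s k).2 < size (s k).1 /\ onth (s k).1 (s k).2 = Some (t k)) /\
   ((s' k).1 \in X /\ (s' k).2 < size (s' k).1 /\ onth (s' k).1 (s' k).2 = Some (t k)) /\
   stepR (s k) (s (k + 1)%R) /\ stepR (s' k) (s' (k + 1)%R).
  move=> k; have [I1 H1] := EV k; have [I2 H2] := EV (k + 1)%R.
  have [g1 [w1 e1]] := H1 (maxn I1 I2) (leq_maxl _ _).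
  have [_ [_ e2]] := H2 (maxn I1 I2) (leq_maxr _ _).
  have hP := hD _ g1.
  have [[a1 [a2 a3]] [[b1 [b2 b3]] [ix [st1 [st2 _]]]]] := local hP w1.
  rewrite /t /s /s' -e1 -e2 /h /c ix /=.
  rewrite /c in a1 a2 a3 b1 b2 b3 st1 st2.
  rewrite a3 -(onth_some a0 a2) b3 a3.
  by split=> //; split=> //; split.
exists t; split.
  move=> k; have [I H] := EV k; exists I => i hi.
  have [g1 [w1 e1]] := H i hi.
  have [[a1 [a2 a3]] [_ [_ [_ [_ sh]]]]] := local (hD _ g1) w1.
  rewrite /= sh -a3 (onth_some a0 a2) /t /s -e1 /h //.
have [xl [xr F1]] := fact_from_states (s := s) (t := t) (fun k => (V k).1) (fun k => (V k).2.2.1).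
have [xl' [xr' F2]] := fact_from_states (s := s') (t := t) (fun k => (V k).2.1) (fun k => (V k).2.2.2).
do 8 eexists; split; first exact: F1.
split; first exact: F2.
right; left.
have [I H] := EV 0%R.
have [g1 [w1 e1]] := H I (leqnn _).
have [_ [_ [_ [h0 h0']]]] := hD _ g1.
have [[_ [a2 _]] [[_ [b2 _]] _]] := local (hD _ g1) w1.
have E1 : (s 0%R) = (D (phi I)).1.2 (c (phi I)) by rewrite /s -e1 /h /= addn0.
have E2 : (s' 0%R) = (D (phi I)).2 (c (phi I)) by rewrite /s' -e1 /h /= addn0.
rewrite E1 E2 h0 take0 => e.
have := congr1 size e; rewrite size_take /=.
move: b2; rewrite /= addn0 => b2.
case: ifP => _ hz; apply: h0'; rewrite /c in hz; first by rewrite -hz.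
lia.
Qed.
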